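(* Let $n\in\{2,3\}$, $d\ge1$, $p\in\mathcal H(n,d)$, let $P=S\cdot Q$ be the induced homogeneous polynomial and $K$ the support of the Newton diagram of $Q$. Then $K$ has no overhang.
   Context: $s(x)=x_1+\dots+x_n$. $\mathcal H(n,d)$ is the set of $p\in\mathbb R[x_1,\dots,x_n]$ of degree $d$ with all coefficients nonnegative and $p(x)=1$ whenever $s(x)=1$. Writing $p=\sum_{k=0}^dp_k$ with $p_k$ homogeneous of degree $k$, the induced homogeneous polynomial is $P(X_0,\dots,X_n)=\sum_{k=0}^dp_k(X_1,\dots,X_n)(-X_0)^{d-k}-(-X_0)^d$; it vanishes where $S(X)=X_0+\dots+X_n=0$, so $P=SQ$. The Newton diagram of $Q$ assigns to $m\in\mathbb Z^n$ the value $P$, $0$, or $N$ according as the coefficient of $X_0^{d-1-|m|}X_1^{m_1}\cdots X_n^{m_n}$ in $Q$ is positive, zero (including when some exponent is negative), or negative ($|m|=m_1+\dots+m_n$); its support $K$ is the set of $m$ with nonzero value. Overhangs: for $K\subset\mathbb Z^2$, a point $(a,b)\in K$ with $(a,b)\ne(0,0)$ is a left overhang if $(a,b-1)\notin K$ and $(a-1,y)\notin K$ for all $y\ge b$; it is a right overhang if $(a-1,b)\notin K$ and $(x,b-1)\notin K$ for all $x\ge a$; an overhang is a left or right overhang. For $K\subset\mathbb Z^3$ define $\pi_1(m)=(m_1,m_2+m_3)$, $\pi_2(m)=(m_1+m_3,m_2)$, $\pi_3(m)=(m_1+m_2,m_3)$; $m\in K$ is an overhang if $\pi_j(m)$ is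 an overhang of $\pi_j(K)$ for some $j$. *)

(* Defs.v *)
From HB Require Import structures.
From mathcomp Require Import all_boot all_order all_algebra.
Set Implicit Arguments. Unset Strict Implicit. Unset Printing Implicit Defensive.
Import Order.TTheory GRing.Theory Num.Theory.
Local Open Scope ring_scope.

(* Exponent vectors of monomials in k variables. *)
Definition mon (k : nat) := {ffun 'I_k -> nat}.

Definition mdeg k (m : mon k) : nat := (\sum_(i < k) m i)%N.

(* A polynomial in k variables is given by its coefficient function
   (coefficient of x^m).  [p_fin d c]: all monomials of c have total degree <= d. *)
Definition p_fin (R : realFieldType) k (d : nat) (c : mon k -> R) : Prop :=
  forall m, (d < mdeg m)%N -> c m = 0.

Definition p_deg (R : realFieldType) k (d : nat) (c : mon k -> R) : Prop :=
  p_fin d c /\ exists m, mdeg m = d /\ c m != 0.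

(* Evaluation of a polynomial of degree <= d at x (exponents <= d suffice). *)
Definition p_eval (R : realFieldType) k (d : nat) (c : mon k -> R) (x : 'I_k -> R) : R :=
  \sum_(f : {ffun 'I_k -> 'I_d.+1})
     c [ffun i => nat_of_ord (f i)] * \prod_(i < k) x i ^+ f i.

Definition in_H (R : realFieldType) (n d : nat) (c : mon n -> R) : Prop :=
  p_deg d c /\ (forall m, 0 <= c m) /\
  (forall x : 'I_n -> R, \sum_(i < n) x i = 1 -> p_eval d c x = 1).

Definition hom_part (R : realFieldType) k (c : mon k -> R) (j : nat) (m : mon k) : R :=
  if mdeg m == j then c m else 0.

(* Variables X_0,...,X_n of P are indexed by 'I_n.+1, X_0 = ord0,
   X_(i+1) = lift ord0 i. *)
Definition tail_mon n (e : mon n.+1) : mon n := [ffun i => e (lift ord0 i)].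

(* Coefficient of X_0^(e 0) X_1^(e 1) ... X_n^(e n) in
   P = sum_(k=0)^d p_k(X_1..X_n) (-X_0)^(d-k) - (-X_0)^d. *)
Definition P_coef (R : realFieldType) n (d : nat) (c : mon n -> R) (e : mon n.+1) : R :=
  \sum_(k < d.+1)
     hom_part c k (tail_mon e) * (if e ord0 == (d - k)%N then (-1) ^+ (d - k)%N else 0)
  - (if (tail_mon e == [ffun => 0%N]) && (e ord0 == d) then (-1) ^+ d else 0).

Definition mon_dec k (e : mon k) (i : 'I_k) : mon k :=
  [ffun j => if j == i then (e j).-1 else e j].

(* P = S * Q, S = X_0 + ... + X_n, compared coefficientwise
   (coefficient of X^e in S*Q is sum over i with e_i > 0 of Q_(e - u_i)). *)
Definition is_S_quotient (R : realFieldType) n (d : nat) (c : mon n -> R)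
    (q : mon n.+1 -> R) : Prop :=
  forall e : mon n.+1,
    P_coef d c e = \sum_(i < n.+1 | (0 < e i)%N) q (mon_dec e i).

(* Coefficient of X_0^(d-1-|m|) X_1^(m_1) ... X_n^(m_n) in Q, 0 if some
   exponent is negative; m in Z^n. *)
Definition newton_coef (R : realFieldType) n (d : nat) (q : mon n.+1 -> R)
    (m : 'I_n -> int) : R :=
  let r : int := (d%:Z - 1 - \sum_(i < n) m i)%R in
  if [forall i, (0 <= m i)%R] && (0 <= r)%R then
    q [ffun j => if unlift ord0 j is Some i then absz (m i) else absz r]
  else 0.

Inductive nd_val := ndP | nd0 | ndN.

Definition newton_diagram (R : realFieldType) n d (q : mon n.+1 -> R) (m : 'I_n -> int)
  : nd_val :=
  let v := newton_coef d q m in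
  if 0 < v then ndP else if v < 0 then ndN else nd0.

Definition newton_support (R : realFieldType) n d (q : mon n.+1 -> R)
  (m : 'I_n -> int) : Prop := newton_diagram d q m <> nd0.

(* coordinate m_(j+1) of a point of Z^n (0 if out of range) *)
Definition coord n (m : 'I_n -> int) (j : nat) : int :=
  if insub j is Some i then m i else 0.

Definition left_overhang (K : int * int -> Prop) (a b : int) : Prop :=
  K (a, b) /\ (a, b) <> (0, 0) /\ ~ K (a, b - 1) /\
  (forall y : int, b <= y -> ~ K (a - 1, y)).

Definition right_overhang (K : int * int -> Prop) (a b : int) : Prop :=
  K (a, b) /\ (a, b) <> (0, 0) /\ ~ K (a - 1, b) /\
  (forall x : int, a <= x -> ~ K (x, b - 1)).

Definition overhang2 (K : int * int -> Prop) (pt : int * int) : Prop :=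
  left_overhang K pt.1 pt.2 \/ right_overhang K pt.1 pt.2.

Definition img2 n (f : ('I_n -> int) -> int * int) (K : ('I_n -> int) -> Prop)
  : int * int -> Prop := fun pt => exists m, K m /\ f m = pt.

(* For n = 2: the identity Z^2 -> Z^2;  for n = 3: pi_1, pi_2, pi_3. *)
Definition id2 n (m : 'I_n -> int) : int * int := (coord m 0, coord m 1).
Definition pi1 n (m : 'I_n -> int) : int * int := (coord m 0, coord m 1 + coord m 2).
Definition pi2 n (m : 'I_n -> int) : int * int := (coord m 0 + coord m 2, coord m 1).
Definition pi3 n (m : 'I_n -> int) : int * int := (coord m 0 + coord m 1, coord m 2).

Definition is_overhang n (K : ('I_n -> int) -> Prop) (m : 'I_n -> int) : Prop :=
  K m /\
  ((n = 2%N /\ overhang2 (img2 (@id2 n) K) (id2 m)) \/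
   (n = 3%N /\ (overhang2 (img2 (@pi1 n) K) (pi1 m) \/
                overhang2 (img2 (@pi2 n) K) (pi2 m) \/
                overhang2 (img2 (@pi3 n) K) (pi3 m)))).

Definition no_overhang n (K : ('I_n -> int) -> Prop) : Prop :=
  forall m, ~ is_overhang K m.

(* Main.v *)
Require Import Defs.
From HB Require Import structures.
From mathcomp Require Import all_boot all_order all_algebra.
From Stdlib Require Import FunctionalExtensionality.
Import Order.TTheory GRing.Theory Num.Theory.
Set Implicit Arguments. Unset Strict Implicit.
Local Open Scope ring_scope.
Definition upd n (m : 'I_n -> int) (j : 'I_n) (c : int) : 'I_n -> int :=
  fun i => if i == j then m i + c else m i.

Lemma sum_upd n (P : pred 'I_n) (m : 'I_n -> int) j c :
  \sum_(i < n | P i) upd m j c i = \sum_(i < n | P i) m i + (if P j then c else 0).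
Proof.
rewrite /upd; case Pj: (P j).
  rewrite (bigD1 j) //= [in RHS](bigD1 j) //= eqxx -addrA [c + _]addrC addrA.
  congr (_ + _); congr (_ + _); apply: eq_bigr => i /andP[_ /negbTE ->] //.
rewrite addr0; apply: eq_bigr => i Pi; case: eqP => // eij.
by rewrite -eij Pi in Pj.
Qed.

Lemma sum_upd_all n (m : 'I_n -> int) j c :
  \sum_(i < n) upd m j c i = \sum_(i < n) m i + c.
Proof. by rewrite (sum_upd predT). Qed.

Lemma core (R : realFieldType) n (d : nat) (M : ('I_n -> int) -> R)
  (A B : pred 'I_n) (hAB : forall i, B i = ~~ A i) (j0 : 'I_n) (Bj0 : B j0)
  (HS : forall m, M m != 0 -> (forall i, 0 <= m i) /\ \sum_i m i < d%:Z)
  (HR : forall m, (forall i, 0 <= m i) -> 0 < \sum_i m i -> \sum_i m i <= d%:Z ->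
        M m <= \sum_j M (upd m j (-1)))
  (a b : int) (m0 : 'I_n -> int) :
  M m0 != 0 -> \sum_(i | A i) m0 i = a -> \sum_(i | B i) m0 i = b -> (a, b) <> (0, 0) ->
  (forall m, \sum_(i | A i) m i = a -> \sum_(i | B i) m i = b - 1 -> M m = 0) ->
  (forall m, \sum_(i | A i) m i = a - 1 -> b <= \sum_(i | B i) m i -> M m = 0) ->
  False.
Proof.
move=> nz0 hA0 hB0 ab0 H1 H2.
have sumAB (m : 'I_n -> int) : \sum_i m i = \sum_(i | A i) m i + \sum_(i | B i) m i.
  by rewrite (bigID A predT) /=; congr (_ + _); apply: eq_bigl => i; rewrite hAB.
have [m0pos m0d] := HS _ nz0.
have a0 : 0 <= a by rewrite -hA0; apply: sumr_ge0 => i _.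
have b0 : 0 <= b by rewrite -hB0; apply: sumr_ge0 => i _.
have C1 : forall k : nat, forall m, \sum_(i | A i) m i = a ->
    \sum_(i | B i) m i = b + k%:Z -> M m <= 0.
  elim=> [|k IH] m hA hB; (have [->//|nz] := eqVneq (M m) 0);
    have [mpos md] := HS _ nz;
    (apply: le_trans (HR m mpos _ _) _; [ | exact: ltW | ]).
  - rewrite lt_neqAle sumr_ge0 // andbT sumAB hA hB addr0; apply/eqP => h.
    move: (eqxx (a + b)); rewrite -{1}h eq_sym paddr_eq0 // => /andP[/eqP a0' /eqP b0'].
    by apply: ab0; rewrite a0' b0'.
  - apply: sumr_le0 => j _; case Aj: (A j).
      rewrite H2 // ?sum_upd ?Aj ?hA ?hB ?hAB ?Aj //= addr0.
      by rewrite addr0.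
    rewrite H1 // ?sum_upd ?Aj ?hA ?hB ?hAB ?Aj //= ?addr0 //.
  - rewrite lt_neqAle sumr_ge0 // andbT sumAB hA hB; apply/eqP => h.
    move: (eqxx (a + (b + k.+1%:Z))); rewrite -{1}h eq_sym paddr_eq0 ?addr_ge0 //.
    by rewrite intS addrCA paddr_eq0 ?addr_ge0 // andbCA.
  - apply: sumr_le0 => j _; case Aj: (A j).
      rewrite H2 // ?sum_upd ?Aj ?hA ?hB ?hAB ?Aj //= addr0.
      by rewrite lerDl.
    apply: IH; rewrite ?sum_upd ?Aj ?hA ?hB ?hAB ?Aj //= ?addr0 //.
    by rewrite intS [1 + _]addrC addrA addrK.
have M0neg : M m0 < 0 by rewrite lt_neqAle nz0 (C1 0%N) // addr0.
have Aj0 : A j0 = false by apply/negbTE; rewrite -hAB.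
have C2 : forall k : nat, \sum_i m0 i + k%:Z <= d%:Z -> M (upd m0 j0 k%:Z) <= M m0.
  elim=> [|k IH] hk.
    have -> : upd m0 j0 0%:Z = m0.
      by apply: functional_extensionality => i; rewrite /upd addr0; case: eqP.
    by [].
  have posk : forall i, 0 <= upd m0 j0 k.+1%:Z i.
    by move=> i; rewrite /upd; case: eqP => _; rewrite ?addr_ge0.
  apply: le_trans (HR _ posk _ _) _.
  - by rewrite sum_upd_all ltr_wpDl // sumr_ge0.
  - by rewrite sum_upd_all.
  rewrite (bigD1 j0) //=.
  have -> : upd (upd m0 j0 k.+1%:Z) j0 (-1) = upd m0 j0 k%:Z.
    apply: functional_extensionality => i; rewrite /upd; case: eqP => // _.
    by rewrite intS [1 + _]addrC addrA addrK.
  apply: le_trans (IH _); last first.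
    by apply: le_trans hk; rewrite lerD2l lez_nat.
  rewrite gerDl; apply: sumr_le0 => j /= jj0; case Aj: (A j).
    rewrite H2 // !sum_upd ?hAB ?Aj ?Aj0 ?hA0 ?hB0 /= ?addr0 ?lerDl //.
  apply: (C1 k); rewrite !sum_upd ?hAB ?Aj ?Aj0 ?hA0 ?hB0 /= ?addr0 //.
  by rewrite intS [1 + _]addrC addrA addrK.
have s0 : 0 <= \sum_i m0 i by apply: sumr_ge0 => i _.
set s := \sum_i m0 i in s0 m0d.
pose k := absz (d%:Z - s).
have hk : s + k%:Z = d%:Z. rewrite gez0_abs ?subr_ge0 ?ltW //. by rewrite addrCA subrr addr0.
have h : M (upd m0 j0 k%:Z) <= M m0 by apply: C2; rewrite hk.
have : M (upd m0 j0 k%:Z) != 0 by rewrite lt_eqF //; apply: le_lt_trans h M0neg.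
move/HS=> [_]; rewrite sum_upd_all -/s hk ltxx //.
Qed.
Lemma sumPosz n (u : 'I_n -> nat) : \sum_i (u i)%:Z = (\sum_i u i)%N%:Z.
Proof. by rewrite (big_morph Posz PoszD (erefl _)). Qed.

Lemma Pcoef_val (R : realFieldType) n (d : nat) (c : mon n -> R) (e : mon n.+1) :
  (0 < mdeg (tail_mon e))%N -> (e ord0 + mdeg (tail_mon e) = d)%N ->
  P_coef d c e = (-1) ^+ (e ord0) * c (tail_mon e).
Proof.
move=> pos hsum; rewrite /P_coef.
have -> : (tail_mon e == [ffun => 0%N]) = false.
  apply/negbTE; apply: contraTneq pos => ->.
  by rewrite /mdeg big1 // => i _; rewrite ffunE.
have lt : (mdeg (tail_mon e) < d.+1)%N by rewrite -hsum ltnS leq_addl.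
rewrite subr0 (bigD1 (Ordinal lt)) //= big1 ?addr0.
  rewrite /hom_part eqxx -hsum addnK eqxx mulrC //.
move=> k /negbTE nk; rewrite /hom_part; case: eqP => [h|]; last by rewrite mul0r.
by move: nk; rewrite -val_eqE /= h eqxx.
Qed.

Definition Uf n (u : 'I_n -> nat) : 'I_n -> int := fun i => (u i)%:Z.

Lemma eqn_N (R : realFieldType) n (d : nat) (c : mon n -> R) (q : mon n.+1 -> R)
  (hS : is_S_quotient d c q) (u : 'I_n -> nat) :
  (0 < \sum_i u i)%N -> (\sum_i u i <= d)%N ->
  newton_coef d q (Uf u) + \sum_j newton_coef d q (upd (Uf u) j (-1)) =
  (-1) ^+ (d - \sum_i u i)%N * c [ffun i => u i].
Proof.
move=> pos le.
set s := (\sum_i u i)%N in pos le *.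
pose e : mon n.+1 := [ffun j => if unlift ord0 j is Some i then u i else (d - s)%N].
have e0 : e ord0 = (d - s)%N by rewrite ffunE unlift_none.
have eL j : e (lift ord0 j) = u j by rewrite ffunE liftK.
have te : tail_mon e = [ffun i => u i] by apply/ffunP => i; rewrite !ffunE liftK.
have md : mdeg [ffun i => u i] = s by rewrite /mdeg; apply: eq_bigr => i _; rewrite ffunE.
have := hS e.
rewrite Pcoef_val te ?md ?e0 ?subnK //.
rewrite big_mkcond big_ord_recl /= => ->.
rewrite e0 /Uf; congr (_ + _).
  rewrite /newton_coef sumPosz.
  have -> : [forall i, 0 <= (u i)%:Z] = true by apply/forallP.
  rewrite /= -/s.
  have hr : d%:Z - 1 - s%:Z = d%:Z - (s.+1)%:Z by rewrite -addrA -opprD intS.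
  rewrite hr subr_ge0 lez_nat subn_gt0.
  case: (ltnP s d) => hsd //.
  congr (q _); apply/ffunP => j; rewrite !ffunE.
  case: (unliftP ord0 j) => [i ->|->].
    by rewrite eq_sym (negbTE (neq_lift _ _)).
  by rewrite eqxx subzn // subnS.
apply: eq_bigr => j _; rewrite eL /newton_coef sum_upd_all sumPosz -/s.
have hr2 : d%:Z - 1 - (s%:Z - 1) = d%:Z - s%:Z by rewrite opprB addrA subrK.
rewrite hr2 subr_ge0 lez_nat le andbT.
case uj: (u j) => [|k] /=.
  have -> : [forall i, 0 <= upd (fun i0 : 'I_n => (u i0)%:Z) j (-1) i] = false.
    by apply/negbTE/forallPn; exists j; rewrite /upd eqxx uj.
  by [].
have -> : [forall i, 0 <= upd (fun i0 : 'I_n => (u i0)%:Z) j (-1) i] = true.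
  apply/forallP => i; rewrite /upd; case: eqP => [->|] //.
  by rewrite uj subr_ge0 lez_nat.
congr (q _); apply/ffunP => i; rewrite !ffunE.
case: (unliftP ord0 i) => [i' ->|->].
  rewrite (inj_eq (@lift_inj _ ord0)) /upd.
  case: eqP => [->|] //; rewrite uj.
  by rewrite intS addrC addKr.
by rewrite (negbTE (neq_lift _ _)) subzn.
Qed.

Definition Mf (R : realFieldType) n (d : nat) (q : mon n.+1 -> R) (m : 'I_n -> int) : R :=
  - ((-1) ^+ absz (d%:Z - \sum_i m i)%R * newton_coef d q m).

Lemma Mf_nz (R : realFieldType) n (d : nat) (q : mon n.+1 -> R) m :
  (Mf d q m != 0) = (newton_coef d q m != 0).
Proof. by rewrite /Mf oppr_eq0 mulf_eq0 signr_eq0. Qed.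

Lemma HS_lem (R : realFieldType) n (d : nat) (q : mon n.+1 -> R) m :
  Mf d q m != 0 -> (forall i, 0 <= m i) /\ \sum_i m i < d%:Z.
Proof.
rewrite Mf_nz /newton_coef; case: ifP => [/andP[/forallP h r] _|]; last by rewrite eqxx.
split=> //; move: r; rewrite subr_ge0 => r.
by rewrite -(subrK 1 d%:Z) ltzD1.
Qed.

Lemma HR_lem (R : realFieldType) n (d : nat) (c : mon n -> R) (q : mon n.+1 -> R)
  (hS : is_S_quotient d c q) (cpos : forall m, 0 <= c m) m :
  (forall i, 0 <= m i) -> 0 < \sum_i m i -> \sum_i m i <= d%:Z ->
  Mf d q m <= \sum_j Mf d q (upd m j (-1)).
Proof.
move=> mpos.
have -> : m = Uf (fun i => absz (m i)).
  by apply: functional_extensionality => i; rewrite /Uf gez0_abs.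
set u := fun i => absz (m i).
rewrite /Uf sumPosz ltz_nat lez_nat => pos le.
have E := eqn_N hS pos le.
rewrite /Mf.
rewrite sumPosz subzn //.
rewrite (eq_bigr (fun j => (-1) ^+ (d - \sum_i u i)%N * newton_coef d q (upd (fun i => (u i)%:Z) j (-1)))); last first.
  move=> j _; rewrite sum_upd_all sumPosz.
  have -> : d%:Z - ((\sum_i u i)%N%:Z + -1) = (d - \sum_i u i).+1%N%:Z.
    by rewrite opprD opprK addrA subzn // intS addrC.
  by rewrite /= exprS mulN1r mulNr opprK.
rewrite -mulr_sumr -subr_ge0 opprK -mulrDr addrC.
move: E; rewrite /Uf => ->.
by rewrite signrMK.
Qed.

Lemma no_lr (R : realFieldType) n (d : nat) (M : ('I_n -> int) -> R)
  (A B : pred 'I_n) (hAB : forall i, B i = ~~ A i) (jA jB : 'I_n) (HA : A jA) (HB : B jB)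
  (HS : forall m, M m != 0 -> (forall i, 0 <= m i) /\ \sum_i m i < d%:Z)
  (HR : forall m, (forall i, 0 <= m i) -> 0 < \sum_i m i -> \sum_i m i <= d%:Z ->
        M m <= \sum_j M (upd m j (-1)))
  (K : ('I_n -> int) -> Prop) (hK : forall m, K m <-> M m != 0)
  (f : ('I_n -> int) -> int * int)
  (hf : forall m, f m = (\sum_(i | A i) m i, \sum_(i | B i) m i)) pt :
  ~ overhang2 (img2 f K) pt.
Proof.
case: pt => a b; case=> /= [[[m0 [Km0 fm0]] [ab [nK1 nK2]]] | [[m0 [Km0 fm0]] [ab [nK1 nK2]]]].
- move: fm0; rewrite hf => -[hA hB].
  apply: (core hAB HB HS HR (m0:=m0)) hA hB ab _ _ ; first by apply/hK.
  + move=> m hA' hB'; apply/eqP; apply/negPn/negP => nz; apply: nK1.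
    by exists m; split; [exact/hK | rewrite hf hA' hB'].
  + move=> m hA' hB'; apply/eqP; apply/negPn/negP => nz; apply: (nK2 _ hB').
    by exists m; split; [exact/hK | rewrite hf hA'].
- move: fm0; rewrite hf => -[hA hB].
  have hBA : forall i, A i = ~~ B i by move=> i; rewrite hAB negbK.
  apply: (core hBA HA HS HR (m0:=m0)) hB hA _ _ _ ; first by apply/hK.
  + by case=> eb ea; apply: ab; rewrite ea eb.
  + move=> m hB' hA'; apply/eqP; apply/negPn/negP => nz; apply: nK1.
    by exists m; split; [exact/hK | rewrite hf hA' hB'].
  + move=> m hB' hA'; apply/eqP; apply/negPn/negP => nz; apply: (nK2 _ hA').
    by exists m; split; [exact/hK | rewrite hf hB'].
Qed.

Lemma coord_val n (m : 'I_n -> int) (i : 'I_n) : Defs.coord m i = m i.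
Proof. by rewrite /Defs.coord valK. Qed.

Lemma sum3 (P : pred 'I_3) (F : 'I_3 -> int) :
  \sum_(i < 3 | P i) F i =
  (if P ord0 then F ord0 else 0) + (if P (lift ord0 ord0) then F (lift ord0 ord0) else 0)
  + (if P (lift ord0 (lift ord0 ord0)) then F (lift ord0 (lift ord0 ord0)) else 0).
Proof. by rewrite big_mkcond !big_ord_recl big_ord0 /= addr0 addrA. Qed.
Lemma sum2 (P : pred 'I_2) (F : 'I_2 -> int) :
  \sum_(i < 2 | P i) F i =
  (if P ord0 then F ord0 else 0) + (if P (lift ord0 ord0) then F (lift ord0 ord0) else 0).
Proof. by rewrite big_mkcond !big_ord_recl big_ord0 /= addr0. Qed.

Lemma hf_pi1 (m : 'I_3 -> int) : pi1 m =
  (\sum_(i < 3 | val i \in [:: 0%N]) m i, \sum_(i < 3 | val i \notin [:: 0%N]) m i).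
Proof.
rewrite /pi1 !sum3 /=.
rewrite -[Defs.coord m 0]/(Defs.coord m (@ord0 2)) -[Defs.coord m 1]/(Defs.coord m (lift ord0 (@ord0 1))).
rewrite -[Defs.coord m 2]/(Defs.coord m (lift ord0 (lift ord0 (@ord0 0)))) !coord_val.
by rewrite !addr0 !add0r.
Qed.

Lemma hf_pi2 (m : 'I_3 -> int) : pi2 m =
  (\sum_(i < 3 | val i \in [:: 0; 2]%N) m i, \sum_(i < 3 | val i \notin [:: 0; 2]%N) m i).
Proof.
rewrite /pi2 !sum3 /=.
rewrite -[Defs.coord m 0]/(Defs.coord m (@ord0 2)) -[Defs.coord m 1]/(Defs.coord m (lift ord0 (@ord0 1))).
rewrite -[Defs.coord m 2]/(Defs.coord m (lift ord0 (lift ord0 (@ord0 0)))) !coord_val.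
by rewrite !addr0 !add0r.
Qed.

Lemma hf_pi3 (m : 'I_3 -> int) : pi3 m =
  (\sum_(i < 3 | val i \in [:: 0; 1]%N) m i, \sum_(i < 3 | val i \notin [:: 0; 1]%N) m i).
Proof.
rewrite /pi3 !sum3 /=.
rewrite -[Defs.coord m 0]/(Defs.coord m (@ord0 2)) -[Defs.coord m 1]/(Defs.coord m (lift ord0 (@ord0 1))).
rewrite -[Defs.coord m 2]/(Defs.coord m (lift ord0 (lift ord0 (@ord0 0)))) !coord_val.
by rewrite !addr0 !add0r.
Qed.

Lemma hf_id2 (m : 'I_2 -> int) : id2 m =
  (\sum_(i < 2 | val i \in [:: 0]%N) m i, \sum_(i < 2 | val i \notin [:: 0]%N) m i).
Proof.
rewrite /id2 !sum2 /=.
rewrite -[Defs.coord m 0]/(Defs.coord m (@ord0 1)) -[Defs.coord m 1]/(Defs.coord m (lift ord0 (@ord0 0))).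
rewrite !coord_val.
by rewrite !addr0 !add0r.
Qed.

Lemma supp_iff (R : realFieldType) n (d : nat) (q : mon n.+1 -> R) m :
  newton_support d q m <-> Mf d q m != 0.
Proof.
rewrite Mf_nz /newton_support /newton_diagram.
case: ltgtP => h; split=> //.

Qed.

Unset Implicit Arguments.
Theorem mainTheorem14 (R : realFieldType) (n d : nat) (c : mon n -> R)
    (q : mon n.+1 -> R) :
  (n = 2%N \/ n = 3%N) -> (1 <= d)%N -> in_H d c ->
  is_S_quotient d c q ->
  no_overhang (newton_support d q).
Proof.
move=> hn hd [_ [cpos _]] hS m [Km H].
have HS := @HS_lem R n d q.
have HR := @HR_lem R n d c q hS cpos.
have hK := @supp_iff R n d q.
case: H => [[n2 ov] | [n3 ov]].
  subst n.
  by apply: (no_lr (A := fun i : 'I_2 => val i \in [:: 0%N]) (B := fun i : 'I_2 => val i \notin [:: 0%N]) (jA := ord0) (jB := lift ord0 ord0) _ _ _ HS HR hK hf_id2 ov).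
subst n.
case: ov => [ov|[ov|ov]].
- by apply: (no_lr (A := fun i : 'I_3 => val i \in [:: 0%N]) (B := fun i : 'I_3 => val i \notin [:: 0%N]) (jA := ord0) (jB := lift ord0 ord0) _ _ _ HS HR hK hf_pi1 ov).
- by apply: (no_lr (A := fun i : 'I_3 => val i \in [:: 0; 2]%N) (B := fun i : 'I_3 => val i \notin [:: 0; 2]%N) (jA := ord0) (jB := lift ord0 ord0) _ _ _ HS HR hK hf_pi2 ov).
- by apply: (no_lr (A := fun i : 'I_3 => val i \in [:: 0; 1]%N) (B := fun i : 'I_3 => val i \notin [:: 0; 1]%N) (jA := ord0) (jB := lift ord0 (lift ord0 ord0)) _ _ _ HS HR hK hf_pi3 ov).
Qed.
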